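(* Under the hypotheses below, assume moreover (UPS): whenever $(x_n)\subset\mathcal{M}$ and $\beta_n\to+\infty$ satisfy $J_{\beta_n}(x_n)\to c_\infty$ and $J_{\beta_n}(\eta_{\beta_n}(x_n))\to c_\infty$, there exists $\bar x\in\mathcal{M}$ such that, up to a subsequence, $x_n\to\bar x$ and $\eta_{\beta_n}(x_n)\to\bar x$. Then $\mathcal{C}_*\cap\mathcal{K}_\infty\neq\emptyset$. More precisely, for every sequence $\beta_n\to+\infty$ and $A_n\in\mathcal{F}$ optimal for $J_{\beta_n}$ at $c_{\beta_n}$, there exists $\bar x\in\mathcal{C}_*\cap\mathcal{K}_\infty\cap\limsup_nA_n$.
   Context: Hypotheses: $(\mathcal{M},\mathrm{dist})$ is a metric space, $\mathcal{F}\subset2^{\mathcal{M}}$; $J_\beta:\mathcal{M}\to\mathbb{R}\cup\{+\infty\}$, $0<\beta<+\infty$, are lower semi-continuous with $J_{\beta_1}\le J_{\beta_2}$ for $\beta_1\le\beta_2$; $J_\infty=\sup_{\beta>0}J_\beta$; $c_\beta=\inf_{A\in\mathcal{F}}\sup_AJ_\beta\in\mathbb{R}$ for all $0<\beta\le+\infty$; every $A\in\mathcal{F}$ is closed; for every $(A_n)\subset\mathcal{F}$ such that for some $\beta$, $A_n\subset\mathcal{M}^{c_\infty+1}_\beta:=\{J_\beta\le c_\infty+1\}$ for all $n$, $\limsup_nA_n\in\mathcal{F}$ (here $\limsup_nA_n$ is the set of limits of sequences $x_{n_j}\in A_{n_j}$, $n_j\to\infty$); for each $0<\beta\le+\infty$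 a map $\eta_\beta:\mathcal{M}^{c_\infty+1}_\beta\to\mathcal{M}^{c_\infty+1}_\beta$ with $\eta_\beta(A)\in\mathcal{F}$ whenever $A\in\mathcal{F}$, $A\subset\mathcal{M}^{c_\infty+1}_\beta$, and $J_\beta(\eta_\beta(x))\le J_\beta(x)$; and for each $0<\beta\le+\infty$, every sequence $x_n$ with $J_\beta(x_n)\to c_\beta$, $J_\beta(\eta_\beta(x_n))\to c_\beta$ has a subsequence converging to a point of $\mathcal{K}_\beta=\{x:J_\beta(x)=J_\beta(\eta_\beta(x))=c_\beta\}$. A set $A$ is optimal for $J$ at $c$ if $A\in\mathcal{F}$ and $\sup_AJ=c$. $\mathcal{C}_*$ is the set of $x\in\mathcal{M}$ for which there are $(x_n)\subset\mathcal{M}$, $\beta_n\to+\infty$ with $x_n\to x$, $J_{\beta_n}(x_n)\to c_\infty$ and $J_{\beta_n}(\eta_{\beta_n}(x_n))\to c_\infty$. *)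

(* Defs.v *)
From HB Require Import structures.
From mathcomp Require Import all_boot all_order all_algebra.
From mathcomp Require Import all_classical all_reals all_analysis.
Set Implicit Arguments. Unset Strict Implicit. Unset Printing Implicit Defensive.
Import Order.TTheory GRing.Theory Num.Theory.
Local Open Scope classical_set_scope.
Local Open Scope ring_scope.

Section Defs.
Variables (R : realType) (M : Type) (dist : M -> M -> R).

Definition is_metric : Prop :=
  [/\ forall x y, dist x y = 0 <-> x = y,
      forall x y, dist x y = dist y x &
      forall x y z, dist x z <= dist x y + dist y z].

Definition mball (x : M) (r : R) : set M := [set y | dist x y < r].

Definition mopen (U : set M) : Prop :=
  forall x, U x -> exists2 r : R, 0 < r & mball x r `<=` U.

Definition mclosed (A : set M) : Prop := mopen (~` A).

Definition lsc (f : M -> \bar R) : Prop :=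
  forall t : R, mopen [set x | (t%:E < f x)%E].

Definition mconv (u : nat -> M) (x : M) : Prop :=
  forall eps : R, 0 < eps -> exists N : nat, forall n, (N <= n)%N -> dist (u n) x < eps.

Definition to_pinfty (b : nat -> R) : Prop :=
  forall A : R, exists N : nat, forall n, (N <= n)%N -> A < b n.

Definition subseq_map (phi : nat -> nat) : Prop := forall n, (phi n < phi n.+1)%N.

Definition limsup_set (A : nat -> set M) : set M :=
  [set x | exists (nj : nat -> nat) (y : nat -> M),
      (forall N : nat, exists J : nat, forall j, (J <= j)%N -> (N <= nj j)%N) /\
      (forall j, A (nj j) (y j)) /\ mconv y x].

Variables (F : set (set M)) (J : \bar R -> M -> \bar R) (eta : \bar R -> M -> M).

Definition cval (b : \bar R) : \bar R :=
  ereal_inf [set ereal_sup [set J b x | x in A] | A in F].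

Definition sublevel (b : \bar R) : set M :=
  [set x | (J b x <= cval +oo%E + 1%:E)%E].

Definition Kset (b : \bar R) : set M :=
  [set x | J b x = cval b /\ J b (eta b x) = cval b].

Definition optimal (Jb : M -> \bar R) (c : \bar R) (A : set M) : Prop :=
  F A /\ ereal_sup [set Jb x | x in A] = c.

Definition Cstar : set M :=
  [set x | exists (xn : nat -> M) (bn : nat -> R),
     (forall n, 0 < bn n) /\ to_pinfty bn /\ mconv xn x /\
     (fun n => J (bn n)%:E (xn n)) @ \oo --> cval +oo%E /\
     (fun n => J (bn n)%:E (eta (bn n)%:E (xn n))) @ \oo --> cval +oo%E].

End Defs.

(* Main.v *)
Require Import Defs.
From HB Require Import structures.
From mathcomp Require Import all_boot all_order all_algebra.
From mathcomp Require Import all_classical all_reals all_analysis.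
From mathcomp Require Import lra.
Import Order.TTheory GRing.Theory Num.Theory.
Local Open Scope classical_set_scope.
Local Open Scope ring_scope.
Set Implicit Arguments. Unset Strict Implicit.
Definition epsc (R : realType) (u : nat -> \bar R) (c : R) :=
  forall e : R, 0 < e -> exists N : nat, forall n, (N <= n)%N ->
    ((c - e)%:E < u n)%E /\ (u n < (c + e)%:E)%E.

Lemma epsc_cvg (R : realType) (u : nat -> \bar R) c : epsc u c -> u @ \oo --> c%:E.
Proof.
move=> H; apply: cvg_EFin.
  have [N HN] := H 1 ltr01; exists N => // n /= /HN [h1 h2].
  by rewrite fin_numE; apply/andP; split; apply/eqP => E; rewrite E in h1 h2.
apply/cvgrPdist_lt => e e0; have [N HN] := H e e0; exists N => // n /= /HN [h1 h2].
have fu : u n \is a fin_num.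
  by rewrite fin_numE; apply/andP; split; apply/eqP => E; rewrite E in h1 h2.
move: h1 h2; rewrite -(fineK fu) !lte_fin => h1 h2.
rewrite ltr_norml; apply/andP; split; lra.
Qed.

Lemma epsc_sub (R : realType) (u : nat -> \bar R) c (phi : nat -> nat) :
  (forall n, (n <= phi n)%N) -> epsc u c -> epsc (u \o phi) c.
Proof.
move=> Hp H e e0; have [N HN] := H e e0; exists N => n Hn; apply: HN.
exact: leq_trans Hn (Hp n).
Qed.

Lemma subseq_ge (phi : nat -> nat) : subseq_map phi -> forall n, (n <= phi n)%N.
Proof. move=> H; elim=> [//|n IH]; exact: leq_ltn_trans IH (H n). Qed.

Lemma small_inv (R : realType) (e : R) : 0 < e ->
  exists N : nat, forall n, (N <= n)%N -> (n.+1%:R)^-1 < e.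
Proof.
move=> e0; exists (Num.truncn (e^-1)) => n Hn.
rewrite -(invrK e) ltf_pV2 ?posrE ?invr_gt0 //.
apply: lt_le_trans (truncnS_gt _) _; rewrite ler_nat; by [].
Qed.
Lemma dist_ge0 (R : realType) (M : Type) (dist : M -> M -> R) :
  is_metric dist -> forall x y, 0 <= dist x y.
Proof.
case=> H0 Hs Ht x y; have := Ht x y x; rewrite (proj2 (H0 x x) erefl) (Hs y x).
lra.
Qed.

Lemma mconv_uniq (R : realType) (M : Type) (dist : M -> M -> R) u x y :
  is_metric dist -> mconv dist u x -> mconv dist u y -> x = y.
Proof.
move=> Hm hx hy; have [H0 Hs Ht] := Hm; apply/H0.
apply/eqP; rewrite eq_le dist_ge0 // andbT.
apply/ler_addgt0Pr => e e0; rewrite add0r.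
have e2 : 0 < e / 2 by rewrite divr_gt0.
have [N1 h1] := hx _ e2; have [N2 h2] := hy _ e2.
have := h1 (maxn N1 N2) (leq_maxl _ _); have := h2 (maxn N1 N2) (leq_maxr _ _).
have := Ht x (u (maxn N1 N2)) y; rewrite (Hs x (u _)); lra.
Qed.

Lemma mconv_sub (R : realType) (M : Type) (dist : M -> M -> R) u x (phi : nat -> nat) :
  (forall n, (n <= phi n)%N) -> mconv dist u x -> mconv dist (u \o phi) x.
Proof.
move=> Hp H e e0; have [N HN] := H e e0; exists N => n Hn; apply: HN.
exact: leq_trans Hn (Hp n).
Qed.

Lemma closed_lim (R : realType) (M : Type) (dist : M -> M -> R) (A : set M) u x :
  is_metric dist -> mclosed dist A -> (forall n, A (u n)) -> mconv dist u x -> A x.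
Proof.
move=> [_ Hs _] Hc Hu Hx; apply: contrapT => nA.
have [r r0 Hr] := Hc x nA; have [N HN] := Hx r r0.
apply: (Hr (u N)) (Hu N); rewrite /mball /= Hs; exact: HN.
Qed.

Lemma lsc_ev (R : realType) (M : Type) (dist : M -> M -> R) (f : M -> \bar R) w x t :
  is_metric dist -> lsc dist f -> (t%:E < f x)%E -> mconv dist w x ->
  exists N, forall j, (N <= j)%N -> (t%:E < f (w j))%E.
Proof.
move=> [_ Hs _] Hl Ht Hw; have [r r0 Hr] := Hl t x Ht; have [N HN] := Hw r r0.
exists N => j Hj; apply: (Hr (w j)); rewrite /mball /= Hs; exact: HN.
Qed.

Lemma lower_bd (R : realType) (bn : nat -> R) : (forall n, 0 < bn n) ->
  to_pinfty bn -> exists2 b0, 0 < b0 & forall n, b0 <= bn n.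
Proof.
move=> Hp Ht; have [N HN] := Ht 1.
suff [b0 b00 Hb] : exists2 b0, 0 < b0 & forall n, (n < N)%N -> b0 <= bn n.
  exists (Num.min b0 1); first by rewrite lt_min b00 ltr01.
  move=> n; case: (ltnP n N) => h; first by rewrite ge_min Hb.
  by rewrite ge_min (ltW (HN n h)) orbT.
elim: N {HN} => [|N [b0 b00 Hb]]; first by exists 1.
exists (Num.min b0 (bn N)); first by rewrite lt_min b00 Hp.
move=> n; rewrite ltnS leq_eqVlt => /orP[/eqP->|h]; first by rewrite ge_min lexx orbT.
by rewrite ge_min Hb.
Qed.

Lemma main_lem (R : realType) (M : Type) (dist : M -> M -> R)
  (F : set (set M)) (J : \bar R -> M -> \bar R) (eta : \bar R -> M -> M) (c : R) :
  is_metric dist ->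
  (forall b : R, 0 < b -> lsc dist (J b%:E)) ->
  (forall (b1 b2 : R), 0 < b1 -> b1 <= b2 -> forall x, (J b1%:E x <= J b2%:E x)%E) ->
  (forall x, J +oo%E x = ereal_sup [set J b%:E x | b in [set b : R | 0 < b]]) ->
  cval F J +oo%E = c%:E ->
  (forall b : R, 0 < b -> (cval F J b%:E <= c%:E)%E) ->
  (forall A, F A -> mclosed dist A) ->
  (forall (An : nat -> set M) (b : \bar R), (0 < b)%E ->
     (forall n, F (An n)) -> (forall n, An n `<=` sublevel F J b) ->
     F (limsup_set dist An)) ->
  (forall (b : \bar R) x, (0 < b)%E -> sublevel F J b x -> sublevel F J b (eta b x)) ->
  (forall (b : \bar R) (A : set M), (0 < b)%E -> F A -> A `<=` sublevel F J b ->
     F (eta b @` A)) ->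
  (forall (b : \bar R) x, (0 < b)%E -> sublevel F J b x -> (J b (eta b x) <= J b x)%E) ->
  (forall (b : \bar R) (xn : nat -> M), (0 < b)%E ->
     (fun n => J b (xn n)) @ \oo --> cval F J b ->
     (fun n => J b (eta b (xn n))) @ \oo --> cval F J b ->
     exists phi : nat -> nat, subseq_map phi /\
       exists2 x, Kset F J eta b x & mconv dist (xn \o phi) x) ->
  (forall (xn : nat -> M) (bn : nat -> R),
     (forall n, 0 < bn n) -> to_pinfty bn ->
     (fun n => J (bn n)%:E (xn n)) @ \oo --> cval F J +oo%E ->
     (fun n => J (bn n)%:E (eta (bn n)%:E (xn n))) @ \oo --> cval F J +oo%E ->
     exists xbar : M, exists phi : nat -> nat, subseq_map phi /\
       mconv dist (xn \o phi) xbar /\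
       mconv dist (fun n => eta (bn (phi n))%:E (xn (phi n))) xbar) ->
  forall (bn : nat -> R) (An : nat -> set M) (en : nat -> R),
   (forall n, 0 < bn n) -> to_pinfty bn -> (forall n, F (An n)) ->
   (forall n, 0 <= en n <= 1) ->
   (forall e, 0 < e -> exists N, forall n, (N <= n)%N -> en n < e) ->
   (forall n x, An n x -> (J (bn n)%:E x <= cval F J (bn n)%:E + (en n)%:E)%E) ->
   exists xbar, Cstar dist F J eta xbar /\ Kset F J eta +oo%E xbar /\
     limsup_set dist An xbar.
Proof.
move=> Hm Hlsc Hmono Hsup Hc Hcle Hcl Hlim Hsub HF Hdec Hcomp Hups
  bn An en Hbp Hbt HA Hen Hen0 HAb.
have Hup : forall n x, An n x -> (J (bn n)%:E x <= (c + en n)%:E)%E.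
  move=> n x /HAb h; apply: le_trans h _; rewrite EFinD leeD2r //; exact: Hcle.
have Hsl : forall n x, An n x -> sublevel F J (bn n)%:E x.
  move=> n x /Hup h; rewrite /sublevel /= Hc; apply: le_trans h _.
  by rewrite -EFinD lee_fin lerD2l; case/andP: (Hen n).
have [b0 b00 Hb0] := lower_bd Hbp Hbt.
pose Tn n := eta (bn n)%:E @` An n.
have FT : forall n, F (Tn n).
  by move=> n; apply: HF => //; [rewrite lte_fin | exact: Hsl].
have HupT : forall n w, Tn n w -> (J (bn n)%:E w <= (c + en n)%:E)%E.
  move=> n w [z Hz <-]; apply: le_trans (Hup _ _ Hz).
  by apply: Hdec; [rewrite lte_fin | exact: Hsl].
have Tsl : forall n, Tn n `<=` sublevel F J b0%:E.
  move=> n w Tw; rewrite /sublevel /=; apply: le_trans (Hmono _ _ b00 (Hb0 n) w) _.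
  case: Tw => z Hz <-; apply: (Hsub _ _ _ (Hsl _ _ Hz)); by rewrite lte_fin.
pose B := limsup_set dist Tn.
have FB : F B by apply: (Hlim Tn b0%:E) => //; rewrite lte_fin.
have C1 : forall x, B x -> (J +oo%E x <= c%:E)%E.
  move=> x [nj [w [Hnj [Hw Hcv]]]]; rewrite Hsup; apply: ge_ereal_sup => _ [b b0p <-].
  rewrite leNgt; apply/negP => Hlt.
  have [t [ct Ht]] : exists t : R, c < t /\ (t%:E < J b%:E x)%E.
    move: Hlt; case: (J b%:E x) => [r| |].
    - by rewrite lte_fin => cr; exists ((c + r) / 2); rewrite lte_fin; split; lra.
    - by move=> _; exists (c + 1); split; [lra | exact: ltry].
    - by rewrite ltNge leNye.
  have [N1 HN1] := lsc_ev Hm (Hlsc b b0p) Ht Hcv.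
  have [N2 HN2] := Hen0 (t - c) (ltac:(rewrite subr_gt0 //)).
  have [N3 HN3] := Hbt b.
  have [J0 HJ0] := Hnj (maxn N2 N3).
  pose j := maxn N1 J0.
  have h1 := HN1 j (leq_maxl _ _).
  have h2 := HJ0 j (leq_maxr _ _).
  have h3 := HN2 (nj j) (leq_trans (leq_maxl _ _) h2).
  have h4 := HN3 (nj j) (leq_trans (leq_maxr _ _) h2).
  have h5 := Hmono b (bn (nj j)) b0p (ltW h4) (w j).
  have h6 := HupT _ _ (Hw j).
  have : (t%:E < (c + en (nj j))%:E)%E by apply: (lt_le_trans h1); exact: (le_trans h5 h6).
  rewrite lte_fin; lra.
have Bsl : B `<=` sublevel F J +oo%E.
  move=> x /C1 h; rewrite /sublevel /= Hc; apply: le_trans h _.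
  rewrite -EFinD lee_fin; lra.
have FeB := HF +oo%E B lt0y FB Bsl.
have supge : (c%:E <= ereal_sup [set J +oo%E x | x in eta +oo%E @` B])%E.
  by rewrite -Hc; apply: ereal_inf_lbound; exists (eta +oo%E @` B).
have Hxk : forall k : nat, exists x, B x /\
    ((c - (k.+1%:R)^-1)%:E < J +oo%E (eta +oo%E x))%E.
  move=> k; have : ((c - (k.+1%:R)^-1)%:E <
      ereal_sup [set J +oo%E x | x in eta +oo%E @` B])%E.
    apply: lt_le_trans supge; rewrite lte_fin ltrBlDr ltrDl invr_gt0 ltr0n //.
  by move=> /ereal_sup_gt [_ [_ [x Bx <-] <-] h]; exists x.
have [xk Hxk'] := choice Hxk.
have E1a : epsc (fun k => J +oo%E (xk k)) c.
  move=> e e0; have [N HN] := small_inv e0; exists N => n Hn.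
  have [Bx hx] := Hxk' n; have hinv := HN n Hn.
  have hd := Hdec +oo%E (xk n) lt0y (Bsl _ Bx); have hc := C1 _ Bx; split.
    by apply: le_lt_trans (lt_le_trans hx hd); rewrite lee_fin lerD2l lerN2; exact: ltW.
  by apply: le_lt_trans hc _; rewrite lte_fin; lra.
have E1b : epsc (fun k => J +oo%E (eta +oo%E (xk k))) c.
  move=> e e0; have [N HN] := small_inv e0; exists N => n Hn.
  have [Bx hx] := Hxk' n; have hinv := HN n Hn.
  have hd := Hdec +oo%E (xk n) lt0y (Bsl _ Bx); have hc := C1 _ Bx; split.
    by apply: le_lt_trans hx; rewrite lee_fin lerD2l lerN2; exact: ltW.
  by apply: le_lt_trans (le_trans hd hc) _; rewrite lte_fin; lra.
have [phi [Hphi [x Kx Hcx]]] : exists phi : nat -> nat, subseq_map phi /\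
       exists2 x, Kset F J eta +oo%E x & mconv dist (xk \o phi) x.
  by apply: Hcomp => //; rewrite Hc; exact: epsc_cvg.
have Bx : B x := closed_lim Hm (Hcl _ FB) (fun n => (Hxk' (phi n)).1) Hcx.
have Jx : J +oo%E x = c%:E by case: Kx => -> _.
case: Bx => nj [w [Hnj [Hw Hcv]]].
have Hz : forall j, exists z, An (nj j) z /\ w j = eta (bn (nj j))%:E z.
  by move=> j; case: (Hw j) => z Hz <-; exists z.
have [z Hz'] := choice Hz.
pose b' j := bn (nj j).
have Hb'p : forall j, 0 < b' j by move=> j; exact: Hbp.
have Hb't : to_pinfty b'.
  move=> A; have [N HN] := Hbt A; have [J0 HJ0] := Hnj N.
  by exists J0 => j /HJ0 /HN.
have LB : forall e, 0 < e -> exists N, forall j, (N <= j)%N ->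
    ((c - e)%:E < J (b' j)%:E (w j))%E.
  move=> e e0; have : ((c - e)%:E < J +oo%E x)%E by rewrite Jx lte_fin; lra.
  rewrite Hsup => /ereal_sup_gt [_ [b b0p <-] hb].
  have [N1 HN1] := lsc_ev Hm (Hlsc b b0p) hb Hcv.
  have [N2 HN2] := Hb't b.
  exists (maxn N1 N2) => j Hj.
  apply: lt_le_trans (HN1 j _) (Hmono _ _ b0p (ltW (HN2 j _)) _).
    exact: leq_trans (leq_maxl _ _) Hj.
  exact: leq_trans (leq_maxr _ _) Hj.
have UB : forall e, 0 < e -> exists N, forall j, (N <= j)%N -> en (nj j) < e.
  move=> e e0; have [N HN] := Hen0 e e0; have [J0 HJ0] := Hnj N.
  by exists J0 => j /HJ0 /HN.
have Bnd : forall e, 0 < e -> exists N, forall j, (N <= j)%N ->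
    [/\ ((c - e)%:E < J (b' j)%:E (w j))%E,
         (J (b' j)%:E (w j) <= J (b' j)%:E (z j))%E &
         (J (b' j)%:E (z j) < (c + e)%:E)%E].
  move=> e e0; have [N1 HN1] := LB e e0; have [N2 HN2] := UB e e0.
  exists (maxn N1 N2) => j Hj; have [Az wz] := Hz' j.
  have hl := HN1 j (leq_trans (leq_maxl _ _) Hj).
  have hu := HN2 j (leq_trans (leq_maxr _ _) Hj).
  have hup := Hup _ _ Az.
  split => //.
    by rewrite wz; apply: Hdec; [rewrite lte_fin | exact: Hsl].
  by apply: le_lt_trans hup _; rewrite lte_fin; lra.
have E2a : epsc (fun j => J (b' j)%:E (z j)) c.
  move=> e e0; have [N HN] := Bnd e e0; exists N => j /HN [h1 h2 h3].
  by split => //; exact: lt_le_trans h1 h2.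
have E2b : epsc (fun j => J (b' j)%:E (eta (b' j)%:E (z j))) c.
  move=> e e0; have [N HN] := Bnd e e0; exists N => j /HN [h1 h2 h3].
  by rewrite -(Hz' j).2; split => //; exact: le_lt_trans h2 h3.
have [xbar [psi [Hpsi [H1 H2]]]] : exists xbar : M, exists phi : nat -> nat,
    subseq_map phi /\ mconv dist (z \o phi) xbar /\
    mconv dist (fun n => eta (b' (phi n))%:E (z (phi n))) xbar.
  by apply: Hups => //; rewrite Hc; apply: epsc_cvg; [exact: E2a | exact: E2b].
have Hpsi' := subseq_ge Hpsi.
have H2' : mconv dist (w \o psi) xbar.
  suff -> : w \o psi = (fun n => eta (b' (psi n))%:E (z (psi n))) by [].
  by apply: funext => n /=; rewrite (Hz' _).2.
have xe : xbar = x := mconv_uniq Hm H2' (mconv_sub Hpsi' Hcv).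
subst xbar.
exists x; split; [|split] => //.
- exists (z \o psi), (b' \o psi); split; first by move=> n; exact: Hb'p.
  split.
    move=> A; have [N HN] := Hb't A; exists N => n Hn; apply: HN.
    exact: leq_trans Hn (Hpsi' n).
  split; first exact: H1.
  rewrite Hc; split; apply: epsc_cvg.
    exact: (epsc_sub Hpsi' E2a).
  exact: (epsc_sub Hpsi' E2b).
- exists (nj \o psi), (z \o psi); split.
    move=> N; have [J0 HJ0] := Hnj N; exists J0 => j Hj; apply: HJ0.
    exact: leq_trans Hj (Hpsi' j).
  by split; [move=> j; exact: (Hz' _).1 | exact: H1].
Qed.
Unset Implicit Arguments. Set Strict Implicit.

Theorem theorem2p11 (R : realType) (M : Type) (dist : M -> M -> R)
  (F : set (set M)) (J : \bar R -> M -> \bar R) (eta : \bar R -> M -> M) :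
  is_metric dist ->
  (* J_beta takes values in R \cup {+oo} *)
  (forall (b : R) x, 0 < b -> J b%:E x != -oo%E) ->
  (* J_beta lower semicontinuous, 0 < beta < +oo *)
  (forall b : R, 0 < b -> lsc dist (J b%:E)) ->
  (* monotone in beta *)
  (forall (b1 b2 : R), 0 < b1 -> b1 <= b2 -> forall x, (J b1%:E x <= J b2%:E x)%E) ->
  (* J_oo = sup_{beta > 0} J_beta *)
  (forall x, J +oo%E x = ereal_sup [set J b%:E x | b in [set b : R | 0 < b]]) ->
  (* c_beta real for 0 < beta <= +oo *)
  (forall b : \bar R, (0 < b)%E -> cval F J b \is a fin_num) ->
  (* every A in F is closed *)
  (forall A, F A -> mclosed dist A) ->
  (* limsup closure of F on sublevel sets *)
  (forall (An : nat -> set M) (b : \bar R), (0 < b)%E ->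
     (forall n, F (An n)) -> (forall n, An n `<=` sublevel F J b) ->
     F (limsup_set dist An)) ->
  (* eta_beta maps M^{c_oo+1}_beta into itself *)
  (forall (b : \bar R) x, (0 < b)%E -> sublevel F J b x -> sublevel F J b (eta b x)) ->
  (* eta_beta preserves F *)
  (forall (b : \bar R) (A : set M), (0 < b)%E -> F A -> A `<=` sublevel F J b ->
     F (eta b @` A)) ->
  (* eta_beta decreases J_beta *)
  (forall (b : \bar R) x, (0 < b)%E -> sublevel F J b x -> (J b (eta b x) <= J b x)%E) ->
  (* compactness condition *)
  (forall (b : \bar R) (xn : nat -> M), (0 < b)%E ->
     (fun n => J b (xn n)) @ \oo --> cval F J b ->
     (fun n => J b (eta b (xn n))) @ \oo --> cval F J b ->
     exists phi : nat -> nat, subseq_map phi /\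
       exists2 x, Kset F J eta b x & mconv dist (xn \o phi) x) ->
  (* (UPS) *)
  (forall (xn : nat -> M) (bn : nat -> R),
     (forall n, 0 < bn n) -> to_pinfty bn ->
     (fun n => J (bn n)%:E (xn n)) @ \oo --> cval F J +oo%E ->
     (fun n => J (bn n)%:E (eta (bn n)%:E (xn n))) @ \oo --> cval F J +oo%E ->
     exists xbar : M, exists phi : nat -> nat, subseq_map phi /\
       mconv dist (xn \o phi) xbar /\
       mconv dist (fun n => eta (bn (phi n))%:E (xn (phi n))) xbar) ->
  (Cstar dist F J eta `&` Kset F J eta +oo%E !=set0) /\
  (forall (bn : nat -> R) (An : nat -> set M),
     (forall n, 0 < bn n) -> to_pinfty bn ->
     (forall n, optimal F (J (bn n)%:E) (cval F J (bn n)%:E) (An n)) ->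
     exists xbar : M, Cstar dist F J eta xbar /\ Kset F J eta +oo%E xbar /\
       limsup_set dist An xbar).
Proof.
move=> Hm HJ Hlsc Hmono Hsup Hfin Hcl Hlim Hsub HF Hdec Hcomp Hups.
have [c Hc] : exists c : R, cval F J +oo%E = c%:E.
  by exists (fine (cval F J +oo%E)); rewrite fineK //; apply: Hfin; exact: lt0y.
have Hcle : forall b : R, 0 < b -> (cval F J b%:E <= c%:E)%E.
  move=> b b0; rewrite -Hc; apply: le_ereal_inf_tmp => _ [A FA <-].
  have h1 : (cval F J b%:E <= ereal_sup [set J b%:E x | x in A])%E.
    by apply: ereal_inf_lbound; exists A.
  apply: le_trans h1 _; apply: ge_ereal_sup => _ [x Ax <-].
  apply: (@le_trans _ _ (J +oo%E x)).
    by rewrite Hsup; apply: ereal_sup_ubound; exists b.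
  by apply: ereal_sup_ubound; exists x.
have main := main_lem Hm Hlsc Hmono Hsup Hc Hcle Hcl Hlim Hsub HF Hdec Hcomp Hups.
split.
  have HA : forall n : nat, exists A, F A /\ forall x, A x ->
      (J (n.+1%:R)%:E x <= cval F J (n.+1%:R)%:E + ((n.+1%:R)^-1)%:E)%E.
    move=> n.
    have [_ [A FA <-] hlt] := @lb_ereal_inf_adherent R
      [set ereal_sup [set J (n.+1%:R)%:E x | x in A] | A in F] ((n.+1%:R)^-1)
      (ltac:(by rewrite invr_gt0 ltr0n)) (ltac:(by apply: Hfin; rewrite lte_fin ltr0n)).
    exists A; split => // x Ax; apply: le_trans (ltW hlt).
    by apply: ereal_sup_ubound; exists x.
  have [An HAn] := choice HA.
  have [x [Cx [Kx _]]] := main (fun n => n.+1%:R) An (fun n => (n.+1%:R)^-1)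
    (fun n => ltac:(by rewrite ltr0n)) (ltac:(move=> A; exists (Num.truncn A) => n Hn;
       apply: lt_le_trans (truncnS_gt A) _; rewrite ler_nat; by []))
    (fun n => (HAn n).1) (fun n => ltac:(by rewrite invr_ge0 ler0n invf_le1 ?ler1n ?ltr0n))
    (fun e e0 => small_inv e0) (fun n => (HAn n).2).
  by exists x.
move=> bn An Hbp Hbt Hopt.
apply: (main bn An (fun _ => 0)) => //.
- by move=> n; case: (Hopt n).
- by move=> n; rewrite lexx ler01.
- by move=> e e0; exists 0%N.
- move=> n x Ax; rewrite adde0; case: (Hopt n) => _ <-.
  by apply: ereal_sup_ubound; exists x.
Qed.
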